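(* Let $G$ be a complete graph on $n$ vertices and let $f_0,f_t$ be token-placements of $G$ such that $D(f_0,f_t)$ has a cycle cover. Let $|\mathcal{C}^*(f_0,f_t)|$ denote the maximum number of cycles in a cycle cover of $D(f_0,f_t)$. Then $\mathrm{OPT}(f_0,f_t)\ge n-|\mathcal{C}^*(f_0,f_t)|$. (Together with the upper bound, $\mathrm{OPT}(f_0,f_t)=n-|\mathcal{C}^*(f_0,f_t)|$.)
   Context: A token-placement of $G=(V,E)$ with colors $C=\{1,\dots,c\}$ is a surjective map $f\colon V\to C$. Two distinct token-placements $f,f'$ are adjacent if there is an edge $uv\in E$ with $f'(u)=f(v)$, $f'(v)=f(u)$ and $f'(w)=f(w)$ for all other $w$. A swapping sequence between $f$ and $f'$ is a sequence $f_1=f,\dots,f_h=f'$ of token-placements with consecutive members adjacent; its length is $h-1$; $\mathrm{OPT}(f,f')$ is the minimum length of such a sequence. The destination graph $D(f,f_t)$ is the directed graph on vertex set $V$ with an arc $(u,v)$ (for all $u,v\in V$, including $u=v$) whenever $f(u)=f_t(v)$. A (vertex-disjoint) cycle cover of a directed graph is a set of vertex-disjoint directed cycles (self-loops count as cycles of length 1) covering every vertex. *)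

(* Defs.v *)
From mathcomp Require Import all_boot all_order all_fingroup.
Set Implicit Arguments. Unset Strict Implicit. Unset Printing Implicit Defensive.

(* Vertices V = 'I_n, colors C = 'I_c (c colors, relabelled 0..c-1). *)

Definition complete_edge (n : nat) : rel 'I_n := fun u v => u != v.

Definition token_placement (n c : nat) (f : {ffun 'I_n -> 'I_c}) : bool :=
  [forall k : 'I_c, exists v : 'I_n, f v == k].

Definition swap_adj (n c : nat) (f g : {ffun 'I_n -> 'I_c}) : bool :=
  (f != g) &&
  [exists u : 'I_n, exists v : 'I_n,
     [&& complete_edge u v, g u == f v, g v == f u &
         [forall w : 'I_n, ((w != u) && (w != v)) ==> (g w == f w)]]].

(* A swapping sequence f_1 = f, ..., f_h = f' is encoded as f :: s with
   s = [:: f_2; ...; f_h]; its length h-1 is size s. *)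
Definition swapping_seq (n c : nat) (f f' : {ffun 'I_n -> 'I_c})
    (s : seq {ffun 'I_n -> 'I_c}) : Prop :=
  [/\ all (@token_placement n c) (f :: s),
      path (@swap_adj n c) f s & last f s = f'].

Definition dest_arc (n c : nat) (f ft : {ffun 'I_n -> 'I_c}) (u v : 'I_n) : bool :=
  f u == ft v.

(* A vertex-disjoint cycle cover of D(f,ft) is encoded by the permutation s of V
   sending each vertex to its successor on its cycle; all arcs (u, s u) must lie
   in D(f,ft). Its cycles are the orbits of s (fixed points = self-loops). *)
Definition is_cycle_cover (n c : nat) (f ft : {ffun 'I_n -> 'I_c})
    (s : {perm 'I_n}) : bool :=
  [forall u : 'I_n, dest_arc f ft u (s u)].

Definition num_cycles (n : nat) (s : {perm 'I_n}) : nat := #|porbits s|.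

Definition max_cycles (n c : nat) (f ft : {ffun 'I_n -> 'I_c}) : nat :=
  \max_(s : {perm 'I_n} | is_cycle_cover f ft s) num_cycles s.

(* Main.v *)
Require Import Defs.
From mathcomp Require Import all_boot all_order all_fingroup.
From mathcomp Require Import zify.

Lemma num_cycles1 n : num_cycles (1 : {perm 'I_n}) = n.
Proof.
rewrite /num_cycles /porbits.
have E : porbit (1 : {perm 'I_n}) =1 (fun x => [set x]).
  move=> x; apply/setP => y; rewrite inE.
  apply/porbitP/eqP => [[i ->]|->]; last by exists 0; rewrite expg0 perm1.
  by rewrite expg1n perm1.
rewrite (eq_imset _ E) card_imset ?card_ord //.
exact: set1_inj.
Qed.

Lemma gen_bound n c (s : seq {ffun 'I_n -> 'I_c}) :
  forall f ft, path (@swap_adj n c) f s -> last f s = ft ->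
  exists sg : {perm 'I_n}, is_cycle_cover f ft sg /\ n <= num_cycles sg + size s.
Proof.
elim: s => [|g s IH] f ft /=.
  move=> _ <-; exists 1%g; split; last by rewrite num_cycles1 addn0.
  by apply/forallP => u; rewrite /dest_arc perm1.
move=> /andP[Hfg Hp] Hl.
have [sg [Hc Hn]] := IH _ _ Hp Hl.
move: Hfg => /andP[_ /existsP[u /existsP[v /and4P[Huv Hgu Hgv /forallP Hw]]]].
exists (tperm u v * sg)%g; split.
  apply/forallP => x; rewrite /dest_arc permM.
  move/forallP: Hc => Hc.
  have Hx : f x = g (tperm u v x).
    case: (tpermP u v x) => [->|->|/eqP xu /eqP xv].
    - by rewrite (eqP Hgv).
    - by rewrite (eqP Hgu).
    - by have := Hw x; rewrite xu xv /= => /eqP ->.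
  by rewrite Hx; exact: Hc.
have := porbits_mul_tperm sg u v.
rewrite /num_cycles in Hn *.
move: Huv; rewrite /complete_edge => ->.
case: (u \notin porbit sg v) => /= H; rewrite -?addnn in H; move: H Hn; move: #|porbits (_ * _)| #|porbits sg| => a b; lia.
Qed.

Theorem mainTheorem15 (n c : nat) (f0 ft : {ffun 'I_n -> 'I_c})
  (H0 : token_placement f0) (Ht : token_placement ft)
  (Hcc : exists s : {perm 'I_n}, is_cycle_cover f0 ft s)
  (s : seq {ffun 'I_n -> 'I_c}) (Hs : swapping_seq f0 ft s) :
  n - max_cycles f0 ft <= size s.
Proof.
case: Hs => _ Hp Hl.
have [sg [Hc Hn]] := @gen_bound _ _ _ _ _ Hp Hl.
have : num_cycles sg <= max_cycles f0 ft.
  by rewrite /max_cycles; apply: (leq_bigmax_cond (F := fun s => num_cycles s)) Hc.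
move=> H; move: H Hn; move: (num_cycles sg) (max_cycles f0 ft) (size s) => a b d; lia.
Qed.
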